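(* Let $\mathcal L$ be an expansion of the language $\langle +,<,0\rangle$ of ordered groups and let $G$ be an $\mathcal L$-structure whose reduct is a densely ordered abelian group. Then $G$ is definably complete if and only if $G$ satisfies the scheme DCI.
   Context: A subset of $G$ is definable if it is defined by an $\mathcal L$-formula with parameters from $G$. A Dedekind cut is a nonempty downward closed subset $C\subseteq G$; a gap is a cut $C\neq G$ with no least upper bound in $G$. $G$ is definably complete if it has no definable gap. For an $\mathcal L$-formula $\varphi(v,\bar w)$, $\mathrm{DCI}_\varphi$ is the sentence $\forall\bar w\Big(\big(\exists s\,\forall v<s\,\varphi(v,\bar w)\ \wedge\ \forall v\big(\forall s<v\,\varphi(s,\bar w)\to\exists u>v\,\forall s<u\,\varphi(s,\bar w)\big)\big)\to\forall v\,\varphi(v,\bar w)\Big)$, and DCI is the scheme $\{\mathrm{DCI}_\varphi:\varphi(v,\bar w)\text{ an }\mathcal L\text{-formula}\}$. *)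

(* Defs.v *)
From Stdlib Require Import Arith Fin.

Set Implicit Arguments.

(* An expansion L of the language <+,<,0> of ordered groups: the symbols
   +, <, 0 are built into the syntax below; L supplies the extra symbols. *)
Record language := {
  funs : Type;            (* extra function symbols (constants = arity 0) *)
  fun_ar : funs -> nat;
  rels : Type;
  rel_ar : rels -> nat
}.

Section Syntax.
Variable L : language.

Inductive term : Type :=
| tVar : nat -> term
| tZero : term
| tAdd : term -> term -> term
| tFun : forall f : funs L, (Fin.t (fun_ar L f) -> term) -> term.

Inductive formula : Type :=
| fEq : term -> term -> formula
| fLt : term -> term -> formula
| fRel : forall r : rels L, (Fin.t (rel_ar L r) -> term) -> formula
| fFalse : formula
| fNot : formula -> formula
| fAnd : formula -> formula -> formula
| fOr : formula -> formula -> formula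
| fImp : formula -> formula -> formula
| fEx : nat -> formula -> formula
| fAll : nat -> formula -> formula.
End Syntax.

Record structure (L : language) := {
  carrier :> Type;
  s_add : carrier -> carrier -> carrier;
  s_zero : carrier;
  s_lt : carrier -> carrier -> Prop;
  s_fun : forall f : funs L, (Fin.t (fun_ar L f) -> carrier) -> carrier;
  s_rel : forall r : rels L, (Fin.t (rel_ar L r) -> carrier) -> Prop
}.

Section Semantics.
Variable L : language.
Variable G : structure L.

Definition assignment := nat -> carrier G.

Definition upd (a : assignment) (v : nat) (x : carrier G) : assignment :=
  fun k => if Nat.eqb k v then x else a k.

Fixpoint eval (a : assignment) (t : term L) : carrier G :=
  match t with
  | tVar _ n => a n
  | tZero _ => s_zero G
  | tAdd t1 t2 => s_add G (eval a t1) (eval a t2)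
  | tFun f ts => s_fun G f (fun i => eval a (ts i))
  end.

Fixpoint sat (a : assignment) (phi : formula L) : Prop :=
  match phi with
  | fEq t1 t2 => eval a t1 = eval a t2
  | fLt t1 t2 => s_lt G (eval a t1) (eval a t2)
  | fRel r ts => s_rel G r (fun i => eval a (ts i))
  | fFalse _ => False
  | fNot p => ~ sat a p
  | fAnd p q => sat a p /\ sat a q
  | fOr p q => sat a p \/ sat a q
  | fImp p q => sat a p -> sat a q
  | fEx v p => exists x, sat (upd a v x) p
  | fAll v p => forall x, sat (upd a v x) p
  end.

Definition is_doag : Prop :=
  let add := s_add G in let lt := s_lt G in let z := s_zero G in
  (forall x y w, add x (add y w) = add (add x y) w) /\
  (forall x y, add x y = add y x) /\
  (forall x, add x z = x) /\
  (forall x, exists y, add x y = z) /\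
  (forall x, ~ lt x x) /\
  (forall x y w, lt x y -> lt y w -> lt x w) /\
  (forall x y, lt x y \/ x = y \/ lt y x) /\
  (forall x y w, lt x y -> lt (add x w) (add y w)) /\
  (forall x y, lt x y -> exists w, lt x w /\ lt w y).

Definition le (x y : carrier G) : Prop := s_lt G x y \/ x = y.

(* Definable subsets: defined by a formula phi(v, w) with parameters from G
   (the parameters are the values the assignment gives to the other
   variables). *)
Definition definable (C : carrier G -> Prop) : Prop :=
  exists (phi : formula L) (v : nat) (a : assignment),
    forall x, C x <-> sat (upd a v x) phi.

Definition is_cut (C : carrier G -> Prop) : Prop :=
  (exists x, C x) /\ (forall x y, C y -> le x y -> C x).

Definition has_lub (C : carrier G -> Prop) : Prop :=
  exists b, (forall x, C x -> le x b) /\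
            (forall b', (forall x, C x -> le x b') -> le b b').

Definition is_gap (C : carrier G -> Prop) : Prop :=
  is_cut C /\ (exists x, ~ C x) /\ ~ has_lub C.

Definition definably_complete : Prop :=
  forall C, definable C -> ~ is_gap C.

(* G |= DCI_phi, where phi = phi(v, w) and w ranges over the remaining
   variables (universally quantified via the assignment a). *)
Definition DCI_holds (phi : formula L) (v : nat) : Prop :=
  forall a : assignment,
    ((exists s, forall y, s_lt G y s -> sat (upd a v y) phi) /\
     (forall x, (forall y, s_lt G y x -> sat (upd a v y) phi) ->
        exists u, s_lt G x u /\ forall y, s_lt G y u -> sat (upd a v y) phi)) ->
    forall x, sat (upd a v x) phi.

Definition satisfies_DCI : Prop :=
  forall (phi : formula L) (v : nat), DCI_holds phi v.

End Semantics.

(* Main.v *)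
Require Import Defs.
From Stdlib Require Import Arith Lia Fin FunctionalExtensionality Classical.

Fixpoint fin_max (n : nat) : (Fin.t n -> nat) -> nat :=
  match n with
  | 0 => fun _ => 0
  | S m => fun g => Nat.max (g Fin.F1) (fin_max m (fun i => g (Fin.FS i)))
  end.

Lemma fin_max_ge : forall n (i : Fin.t n) g, g i <= fin_max n g.
Proof.
  induction i; intros g; simpl.
  - lia.
  - specialize (IHi (fun j => g (Fin.FS j))). simpl in IHi. lia.
Qed.

Section Fresh.
Variable L : language.

Fixpoint tmax (t : term L) : nat :=
  match t with
  | tVar _ n => S n
  | tZero _ => 0
  | tAdd t1 t2 => Nat.max (tmax t1) (tmax t2)
  | tFun f ts => fin_max _ (fun i => tmax (ts i))
  end.

Fixpoint fmax (p : formula L) : nat :=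
  match p with
  | fEq t1 t2 => Nat.max (tmax t1) (tmax t2)
  | fLt t1 t2 => Nat.max (tmax t1) (tmax t2)
  | fRel r ts => fin_max _ (fun i => tmax (ts i))
  | fFalse _ => 0
  | fNot p => fmax p
  | fAnd p q => Nat.max (fmax p) (fmax q)
  | fOr p q => Nat.max (fmax p) (fmax q)
  | fImp p q => Nat.max (fmax p) (fmax q)
  | fEx v p => Nat.max (S v) (fmax p)
  | fAll v p => Nat.max (S v) (fmax p)
  end.

Variable G : structure L.

Lemma eval_agree : forall t (a b : assignment G),
  (forall k, k < tmax t -> a k = b k) -> eval a t = eval b t.
Proof.
  induction t as [n| |t1 IH1 t2 IH2|f ts IH]; intros a b H; simpl in *.
  - apply H. lia.
  - reflexivity.
  - rewrite (IH1 a b), (IH2 a b); auto; intros k Hk; apply H; lia.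
  - f_equal. apply functional_extensionality. intro i. apply IH.
    intros k Hk. apply H. pose proof (fin_max_ge _ i (fun i => tmax (ts i))).
    simpl in H0. lia.
Qed.

Lemma upd_agree : forall (a b : assignment G) v x N,
  (forall k, k < N -> a k = b k) -> forall k, k < N -> upd a v x k = upd b v x k.
Proof.
  intros a b v x N H k Hk. unfold upd. destruct (Nat.eqb k v); auto.
Qed.

Lemma sat_agree : forall p (a b : assignment G),
  (forall k, k < fmax p -> a k = b k) -> (sat a p <-> sat b p).
Proof.
  induction p; intros a b H; cbn [sat].
  - rewrite (eval_agree t a b), (eval_agree t0 a b); try tauto;
      intros k Hk; apply H; cbn [fmax]; lia.
  - rewrite (eval_agree t a b), (eval_agree t0 a b); try tauto;
      intros k Hk; apply H; cbn [fmax]; lia.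
  - replace (fun i => eval a (t i)) with (fun i => eval b (t i)). tauto.
    apply functional_extensionality. intro i. symmetry. apply eval_agree.
    intros k Hk. apply H. cbn [fmax]. pose proof (fin_max_ge _ i (fun i => tmax (t i))).
    simpl in H0. lia.
  - tauto.
  - rewrite (IHp a b H). tauto.
  - rewrite (IHp1 a b), (IHp2 a b); try tauto; intros k Hk; apply H; cbn [fmax]; lia.
  - rewrite (IHp1 a b), (IHp2 a b); try tauto; intros k Hk; apply H; cbn [fmax]; lia.
  - rewrite (IHp1 a b), (IHp2 a b); try tauto; intros k Hk; apply H; cbn [fmax]; lia.
  - assert (A : forall x k, k < fmax p -> upd a n x k = upd b n x k).
    { intros x k Hk. apply upd_agree with (N := fmax p); auto.
      intros k' Hk'. apply H. cbn [fmax]. lia. }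
    split; intros [x Hx]; exists x.
    + apply (proj1 (IHp (upd a n x) (upd b n x) (A x))); auto.
    + apply (proj2 (IHp (upd a n x) (upd b n x) (A x))); auto.
  - assert (A : forall x k, k < fmax p -> upd a n x k = upd b n x k).
    { intros x k Hk. apply upd_agree with (N := fmax p); auto.
      intros k' Hk'. apply H. cbn [fmax]. lia. }
    split; intros Hx x.
    + apply (proj1 (IHp (upd a n x) (upd b n x) (A x))); auto.
    + apply (proj2 (IHp (upd a n x) (upd b n x) (A x))); auto.
Qed.
End Fresh.

Theorem proposition3p2 (L : language) (G : structure L) :
  is_doag G -> (definably_complete G <-> satisfies_DCI G).
Proof.
  intros (_ & _ & _ & _ & Hirr & Htr & Htot & _ & Hden).
  split.
  - intros DC phi v a [[s Hs] Hstep] x0.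
    destruct (classic (sat (upd a v x0) phi)) as [Hx|Hx]; auto.
    exfalso.
    set (C := fun x => forall y, s_lt G y x -> sat (upd a v y) phi).
    assert (HdefC : definable G C).
    { set (v' := Nat.max (S v) (fmax L phi)).
      exists (fAll v (fImp (fLt (tVar L v) (tVar L v')) phi)), v', a.
      intro x. unfold C. cbn [sat eval].
      assert (Hv : Nat.eqb v v = true) by (apply Nat.eqb_refl).
      assert (Hv' : Nat.eqb v' v = false) by (apply Nat.eqb_neq; unfold v'; lia).
      assert (E1 : forall y, upd (upd a v' x) v y v = y)
        by (intro; unfold upd; rewrite Nat.eqb_refl; auto).
      assert (E2 : forall y, upd (upd a v' x) v y v' = x)
        by (intro; unfold upd; rewrite Hv', Nat.eqb_refl; auto).
      setoid_rewrite E1. setoid_rewrite E2.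
      assert (E : forall y, sat (upd (upd a v' x) v y) phi <-> sat (upd a v y) phi).
      { intro y. apply (@sat_agree L G). intros k Hk. unfold upd.
        destruct (Nat.eqb k v); auto.
        assert (Nat.eqb k v' = false) by (apply Nat.eqb_neq; unfold v'; lia).
        rewrite H; auto. }
      split; intros H y Hy; [apply E | apply (proj1 (E y))]; apply H; auto. }
    apply (DC C HdefC).
    assert (HnC : ~ C x0).
    { intro Hc. destruct (Hstep x0 Hc) as [u [Hu Hu']]. auto. }
    split; [split|split].
    + exists s. exact Hs.
    + intros x y Hy [Hxy|<-]; auto. intros w Hw. apply Hy. eauto.
    + exists x0; auto.
    + intros [b [Hub Hleast]].
      assert (Cb : C b).
      { intros y Hy.
        destruct (classic (forall c, C c -> le G c y)) as [Hu|Hu].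
        - destruct (Hleast y Hu) as [H|H]. destruct (Hirr y); eauto.
          subst; destruct (Hirr y Hy).
        - apply not_all_ex_not in Hu.
          destruct Hu as [c Hc].
          destruct (imply_to_and _ _ Hc) as [Cc Hnc].
          destruct (Htot c y) as [H|[H|H]].
          + destruct Hnc; left; auto.
          + destruct Hnc; right; auto.
          + apply Cc; auto. }
      destruct (Hstep b Cb) as [u [Hbu Cu]].
      destruct (Hub u Cu) as [H|H]. destruct (Hirr b); eauto.
      rewrite H in Hbu; destruct (Hirr _ Hbu).
  - intros DCI C [phi [v [a HC]]] [[[c Hc] Hdown] [[x0 Hx0] Hnolub]].
    apply Hx0. apply HC.
    apply (DCI phi v a). split.
    + exists c. intros y Hy. apply HC. apply (Hdown y c Hc). left; auto.
    + intros x Hx.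
      destruct (classic (C x)) as [Cx|Cx].
      * destruct (classic (exists d, C d /\ s_lt G x d)) as [[d [Cd Hxd]]|Hno].
        -- exists d. split; auto. intros y Hy. apply HC. apply (Hdown y d Cd). left; auto.
        -- exfalso. apply Hnolub. exists x. split.
           ++ intros z Cz. destruct (Htot z x) as [H|[H|H]].
              left; auto. right; auto. destruct Hno; eauto.
           ++ intros b' Hb'. apply Hb'; auto.
      * exfalso. apply Hnolub. exists x. split.
        -- intros z Cz. destruct (Htot z x) as [H|[H|H]].
           left; auto. right; auto. destruct Cx. apply (Hdown x z Cz). left; auto.
        -- intros b' Hb'. destruct (Htot b' x) as [H|[H|H]].
           ++ destruct (Hden b' x H) as [w [H1 H2]].
              assert (Cw : C w) by (apply HC; apply Hx; auto).
              destruct (Hb' w Cw) as [H3|H3]. destruct (Hirr w); eauto.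
              rewrite H3 in H1; destruct (Hirr _ H1).
           ++ right; auto.
           ++ left; auto.
Qed.
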